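(* Let $N\ge 1$ and let $\boldsymbol{R}\in\mathbb{C}^{N\times N}$ be Hermitian and positive semi-definite, with eigenvalues $\lambda_1\le\cdots\le\lambda_N$, where $\lambda_N>0$. Let $\boldsymbol{e}_N$ be a unit-norm eigenvector of $\boldsymbol{R}$ for the eigenvalue $\lambda_N$, and let $\boldsymbol{d}\in\Omega^N$ be defined by $\boldsymbol{d}(i)=e^{j\arg(\boldsymbol{e}_N(i))}$ if $\boldsymbol{e}_N(i)\neq 0$ and $\boldsymbol{d}(i)=e^{j0}=1$ if $\boldsymbol{e}_N(i)=0$. Let $V_{\mathcal{D}}=\boldsymbol{d}^H\boldsymbol{R}\boldsymbol{d}$ and $V_{opt}=\max_{\boldsymbol{s}\in\Omega^N}\boldsymbol{s}^H\boldsymbol{R}\boldsymbol{s}$. Then \[ \frac{V_{\mathcal{D}}}{V_{opt}}\ \ge\ \frac{\lambda_N+(N-1)\lambda_1}{\lambda_N N}. \]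
   Context: $\Omega=\{x\in\mathbb{C}: |x|=1\}$ is the complex unit circle and $j$ is the imaginary unit. $\arg(x)$ denotes the argument of a complex number $x$, and $\boldsymbol{e}_N(i)$ is the $i$th entry of $\boldsymbol{e}_N$. The vector $\boldsymbol{d}$ is the output of the ''dominant-eigenvector-matching'' heuristic for the unimodular quadratic program $\max_{\boldsymbol{s}\in\Omega^N}\boldsymbol{s}^H\boldsymbol{R}\boldsymbol{s}$. *)

(* Defs.v *)
From HB Require Import structures.
From mathcomp Require Import all_boot all_order all_algebra.
From mathcomp Require Import complex.
Set Implicit Arguments. Unset Strict Implicit. Unset Printing Implicit Defensive.
Import Order.TTheory GRing.Theory Num.Theory.
Local Open Scope ring_scope.

Section Defs.
Variable R : rcfType.
Local Notation C := R[i].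

Definition ctrmx (m n : nat) (A : 'M[C]_(m, n)) : 'M[C]_(n, m) :=
  (map_mx (fun z : C => z^*) A)^T.

Definition is_hermitian (N : nat) (A : 'M[C]_N) : Prop := ctrmx A = A.

Definition qform (N : nat) (A : 'M[C]_N) (v : 'cV[C]_N) : C :=
  (ctrmx v *m A *m v) 0 0.

Definition is_psd (N : nat) (A : 'M[C]_N) : Prop :=
  forall v : 'cV[C]_N, 0 <= qform A v.

Definition is_eigenvalue (N : nat) (A : 'M[C]_N) (a : C) : Prop :=
  exists v : 'cV[C]_N, v != 0 /\ A *m v = a *: v.

Definition unimodular (N : nat) (s : 'cV[C]_N) : Prop :=
  forall i, `|s i 0| = 1.

(* e^{j arg z} for z <> 0, and e^{j0} = 1 for z = 0 *)
Definition phase (z : C) : C := if z == 0 then 1 else z / `|z|.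

Definition dem_vec (N : nat) (e : 'cV[C]_N) : 'cV[C]_N :=
  \col_i phase (e i 0).

End Defs.

(* Main.v *)
Require Import Defs.
From HB Require Import structures.
From mathcomp Require Import all_boot all_order all_algebra.
From mathcomp Require Import complex spectral sesquilinear.
From mathcomp Require Import ring.
Set Implicit Arguments. Unset Strict Implicit. Unset Printing Implicit Defensive.
Import Order.TTheory GRing.Theory Num.Theory.
Local Open Scope ring_scope.

Section H.
Variable R : rcfType.
Local Notation C := R[i].

Lemma ctrmxE m n (A : 'M[C]_(m, n)) : ctrmx A = (A ^t* )%sesqui.
Proof. by rewrite /ctrmx map_trmx. Qed.

Lemma ctrmx_mul m n p (A : 'M[C]_(m, n)) (B : 'M[C]_(n, p)) :
  ctrmx (A *m B) = ctrmx B *m ctrmx A.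
Proof. by rewrite /ctrmx map_mxM trmx_mul. Qed.

Lemma ctrmxK m n (A : 'M[C]_(m, n)) : ctrmx (ctrmx A) = A.
Proof.
by apply/matrixP => i j; rewrite !mxE conjCK.
Qed.

Definition dot n (u v : 'cV[C]_n) : C := (ctrmx u *m v) 0 0.

Lemma dotE n (u v : 'cV[C]_n) : dot u v = \sum_i (u i 0)^* * v i 0.
Proof. by rewrite /dot mxE; apply: eq_bigr => i _; rewrite !mxE. Qed.

Lemma dotC n (u v : 'cV[C]_n) : dot u v = (dot v u)^*.
Proof.
rewrite !dotE rmorph_sum; apply: eq_bigr => i _.
by rewrite rmorphM /= conjCK mulrC.
Qed.

Lemma dotDr n (u v w : 'cV[C]_n) : dot u (v + w) = dot u v + dot u w.
Proof. by rewrite !dotE -big_split; apply: eq_bigr => i _; rewrite mxE mulrDr. Qed.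

Lemma dotZr n a (u v : 'cV[C]_n) : dot u (a *: v) = a * dot u v.
Proof. by rewrite !dotE mulr_sumr; apply: eq_bigr => i _; rewrite mxE mulrCA. Qed.

Lemma dotDl n (u v w : 'cV[C]_n) : dot (v + w) u = dot v u + dot w u.
Proof. by rewrite dotC dotDr rmorphD /= -!dotC. Qed.

Lemma dotZl n a (u v : 'cV[C]_n) : dot (a *: v) u = a^* * dot v u.
Proof. by rewrite dotC dotZr rmorphM /= -dotC. Qed.

Lemma dotBr n (u v w : 'cV[C]_n) : dot u (v - w) = dot u v - dot u w.
Proof. by rewrite dotDr -scaleN1r dotZr mulN1r. Qed.

Lemma dotBl n (u v w : 'cV[C]_n) : dot (v - w) u = dot v u - dot w u.
Proof. by rewrite dotDl -scaleN1r dotZl rmorphN1 mulN1r. Qed.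

Lemma qformE n (A : 'M[C]_n) v : qform A v = dot v (A *m v).
Proof. by rewrite /qform /dot mulmxA. Qed.

Lemma qform1 n (v : 'cV[C]_n) : qform 1%:M v = dot v v.
Proof. by rewrite qformE mul1mx. Qed.

Lemma dot_adj n (A : 'M[C]_n) u v : dot u (A *m v) = dot (ctrmx A *m u) v.
Proof. by rewrite /dot ctrmx_mul ctrmxK mulmxA. Qed.

Lemma dot_self n (v : 'cV[C]_n) : dot v v = \sum_i `|v i 0| ^+ 2.
Proof. by rewrite dotE; apply: eq_bigr => i _; rewrite normCK mulrC. Qed.


Lemma rayleigh n (A : 'M[C]_n) (l1 lN : C) : ctrmx A = A ->
  (forall a, is_eigenvalue A a -> l1 <= a) ->
  (forall a, is_eigenvalue A a -> a <= lN) -> forall v,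
  l1 * dot v v <= dot v (A *m v) /\ dot v (A *m v) <= lN * dot v v.
Proof.
move=> hA h1 hN v.
have nA : A \is normalmx by apply/normalmxP; rewrite -ctrmxE hA.
set P := spectralmx A; set D := spectral_diag A.
have PU : P \is unitarymx := spectral_unitarymx A.
have PPt : P *m (P^t* )%sesqui = 1%:M := unitarymxP PU.
have PtP : (P^t* )%sesqui *m P = 1%:M.
  by have := unitarymxP (etrans (trmxC_unitary P) PU); rewrite trmxCK.
have AE : A = ctrmx P *m diag_mx D *m P.
  by rewrite ctrmxE -invmx_unitary //; exact/orthomx_spectralP.
have eig k : is_eigenvalue A (D 0 k).
  exists (col k (ctrmx P)); split.
    apply/eqP => h; have := congr1 (mulmx P) h.
    rewrite colE mulmxA ctrmxE PPt mul1mx mulmx0 => /matrixP /(_ k 0).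
    by rewrite !mxE eqxx /= => /eqP; rewrite oner_eq0.
  rewrite colE mulmxA AE -(mulmxA _ P) ctrmxE PPt mulmx1 -ctrmxE -!colE.
  by rewrite mul_mx_diag; apply/matrixP => i j; rewrite !mxE mulrC.
set w := P *m v.
have E1 : dot v v = \sum_k `|w k 0| ^+ 2.
  by rewrite -dot_self /w dot_adj mulmxA ctrmxE PtP mul1mx.
have E2 : dot v (A *m v) = \sum_k D 0 k * `|w k 0| ^+ 2.
  rewrite {1}AE -!mulmxA dot_adj (ctrmxK P) -/w dotE; apply: eq_bigr => k _.
  by rewrite /w mul_diag_mx !mxE normCKC mulrCA.
rewrite E1 E2 !mulr_sumr; split; apply: ler_sum => k _;
  apply: ler_wpM2r; rewrite ?exprn_ge0 //.
exact: h1.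
exact: hN.
Qed.


Lemma dot_gt0 n (v : 'cV[C]_n) : v != 0 -> 0 < dot v v.
Proof.
move=> nz; rewrite lt_def dot_self sumr_ge0 ?andbT; last by move=> i _; rewrite exprn_ge0.
apply: contraNneq nz => h; apply/eqP/matrixP => i j.
have hnn : forall k : 'I_n, true -> 0 <= `|v k 0| ^+ 2 by move=> k _; rewrite exprn_ge0.
have := psumr_eq0P hnn h (i:=i) isT.
by move/eqP; rewrite sqrf_eq0 normr_eq0 ord1 !mxE => /eqP.
Qed.

Lemma dot_unimod n (s : 'cV[C]_n) : unimodular s -> dot s s = n%:R.
Proof.
move=> hs; rewrite dot_self (eq_bigr (fun _ => 1)); last by move=> i _; rewrite hs expr1n.
by rewrite sumr_const card_ord.
Qed.

Lemma phase_norm (z : C) : `|phase z| = 1.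
Proof.
rewrite /phase; case: eqP => [_|/eqP nz]; first by rewrite normr1.
by rewrite normrM normfV normr_id mulfV // normr_eq0.
Qed.

Lemma conj_phase (z : C) : z^* * phase z = `|z|.
Proof.
rewrite /phase; case: eqP => [->|/eqP nz]; first by rewrite normr0 rmorph0 mul0r.
by rewrite mulrA -normCKC expr2 mulfK // normr_eq0.
Qed.

End H.

Theorem proposition1 (R : rcfType) (N : nat) (RR : 'M[R[i]]_N)
    (lam1 lamN : R) (e : 'cV[R[i]]_N) (Vopt : R[i]) :
  (0 < N)%N ->
  is_hermitian RR -> is_psd RR ->
  (* lam1 is the smallest and lamN the largest eigenvalue of RR *)
  is_eigenvalue RR lam1%:C%C ->
  (forall a, is_eigenvalue RR a -> lam1%:C%C <= a) ->
  is_eigenvalue RR lamN%:C%C ->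
  (forall a, is_eigenvalue RR a -> a <= lamN%:C%C) ->
  0 < lamN ->
  (* e is a unit-norm eigenvector for lamN *)
  qform 1%:M e = 1 -> RR *m e = lamN%:C%C *: e ->
  (* Vopt = max over s in Omega^N of s^H RR s *)
  (exists2 s, unimodular s & qform RR s = Vopt) ->
  (forall s, unimodular s -> qform RR s <= Vopt) ->
  qform RR (dem_vec e) / Vopt >=
    (lamN + (N - 1)%:R * lam1)%:C%C / (lamN * N%:R)%:C%C.
Proof.
move=> N0 hH hP ev1 h1 evN hN lN0 e1 eE [s su sE] hmax.
set l1 := lam1%:C%C; set lN := lamN%:C%C; set n : R[i] := N%:R.
have Hr := rayleigh hH h1 hN.
have lN0' : 0 < lN by rewrite ltcR.
have l1N : l1 <= lN by apply: h1.
have l10 : 0 <= l1.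
  case: ev1 => v [vnz vE]; have := hP v; rewrite qformE vE dotZr.
  by rewrite pmulr_lge0 // dot_gt0.
have cN : lN^* = lN by rewrite geC0_conj // ltW.
have n1 : (1 <= N%:R :> R[i]) by rewrite ler1n.
have ee : dot e e = 1 by rewrite -qform1.
set d := dem_vec e.
have du : unimodular d by move=> i; rewrite mxE phase_norm.
have dd : dot d d = n by rewrite dot_unimod.
set a := dot e d.
have aE : a = \sum_i `|e i 0|.
  by rewrite /a dotE; apply: eq_bigr => i _; rewrite mxE conj_phase.
have a0 : 0 <= a by rewrite aE sumr_ge0.
have ca : a^* = a by rewrite geC0_conj.
have a1 : 1 <= a.
  rewrite -ee dot_self aE; apply: ler_sum => i _.
  have le1 : `|e i 0| <= 1.
    rewrite -(expr_le1 (n:=2)) // -ee dot_self (bigD1 i) //= lerDl.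
    by rewrite sumr_ge0 // => j _; rewrite exprn_ge0.
  by rewrite expr2; apply: le_trans (ler_wpM2l (normr_ge0 _) le1) _; rewrite mulr1.
set f := d - a *: e.
have ef : dot e f = 0 by rewrite dotBr dotZr ee mulr1 subrr.
have fe : dot f e = 0 by rewrite dotC ef rmorph0.
have eAf : dot e (RR *m f) = 0.
  by rewrite dot_adj hH eE dotZl cN ef mulr0.
have dE : d = a *: e + f by rewrite /f addrC subrK.
have ff : dot f f = n - a * a.
  rewrite {1}/f dotBr dotZr fe mulr0 subr0 /f dotBl dd dotZl ca -/a.
  done.
set Q := dot f (RR *m f).
have VE : qform RR d = a * a * lN + Q.
  rewrite qformE {1 2}dE mulmxDr -scalemxAr eE scalerA.
  rewrite dotDl !dotDr !dotZl !dotZr ee eAf fe ca; rewrite -/lN -/Q; ring.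
have VD : lN + (n - 1) * l1 <= qform RR d.
  have HQ : l1 * (n - a * a) <= Q by rewrite -ff; exact: (Hr f).1.
  rewrite VE -subr_ge0.
  have -> : a * a * lN + Q - (lN + (n - 1) * l1)
      = (a * a - 1) * (lN - l1) + (Q - l1 * (n - a * a)) by ring.
  apply: addr_ge0; last by rewrite subr_ge0.
  apply: mulr_ge0; rewrite subr_ge0 //.
  by have := ler_pM ler01 ler01 a1 a1; rewrite mulr1.
have V0 : 0 <= qform RR d := hP d.
have Vo_le : Vopt <= lN * n.
  by rewrite -sE qformE /n -(dot_unimod su); exact: (Hr s).2.
have num_pos : 0 < lN + (n - 1) * l1.
  by apply: lt_le_trans lN0' _; rewrite lerDl mulr_ge0 // subr_ge0.
have Vo0 : 0 < Vopt.
  by apply: lt_le_trans num_pos (le_trans VD _); exact: hmax.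
have -> : (lamN + (N - 1)%:R * lam1)%:C%C = lN + (n - 1) * l1.
  by rewrite rmorphD rmorphM rmorph_nat natrB.
have -> : (lamN * N%:R)%:C%C = lN * n by rewrite rmorphM rmorph_nat.
have m0 : 0 < lN * n by rewrite mulr_gt0 // ltr0n.
apply: le_trans (_ : qform RR d / (lN * n) <= _).
  by apply: ler_wpM2r => //; rewrite invr_ge0 ltW.
apply: (ler_wpM2l V0). by rewrite lef_pV2 ?posrE.
Qed.
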